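(* Let $N>0$. For any constant $C>0$ there exists a constant $C_0$ such that $$\prod_{j=1}^\infty\big(1+Ce^{C|\lambda|^N-\sqrt{j}/C}\big)\le C_0e^{C_0|\lambda|^{3N}}$$ holds for all $\lambda\in\mathbb{R}$. *)

(* Defs.v *)
From HB Require Import structures.
From mathcomp Require Import all_boot all_order all_algebra.
From mathcomp Require Import all_classical all_reals all_analysis.
Set Implicit Arguments. Unset Strict Implicit. Unset Printing Implicit Defensive.
Import Order.TTheory GRing.Theory Num.Theory.
Local Open Scope ring_scope.

(* Partial products  P_n = \prod_{j=1}^{n} u j ; the infinite product
   \prod_{j>=1} u j is the limit of P_n as n -> oo. *)
Definition partial_prod (R : realType) (u : nat -> R) (n : nat) : R :=
  \prod_(1 <= j < n.+1) u j.

Definition lemma3p1_factor (R : realType) (N C lam : R) (j : nat) : R :=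
  1 + C * expR (C * (`|lam| `^ N) - Num.sqrt (j%:R) / C).

(* Main.v *)
From HB Require Import structures.
From mathcomp Require Import all_boot all_order all_algebra.
From mathcomp Require Import all_classical all_reals all_analysis.
From mathcomp Require Import ring lra zify.
Import Order.TTheory GRing.Theory Num.Theory numFieldNormedType.Exports.
Local Open Scope ring_scope.
Require Import Defs.
Lemma sum_inv_sq (R : realType) (n : nat) :
  \sum_(1 <= j < n.+1) ((j%:R : R) ^+ 2)^-1 <= 2 - 2 / (n.+1)%:R.
Proof.
elim: n => [|n IH]; first by rewrite big_geq // divr1 subrr.
rewrite big_nat_recr //=.
set y : R := n.+1%:R.
have hy : 1 <= y by rewrite /y ler1n.
have -> : (n.+2%:R : R) = y + 1 by rewrite /y -natr1.
have key : 0 <= 2 / y - 2 / (y + 1) - (y ^+ 2)^-1.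
  have -> : 2 / y - 2 / (y + 1) - (y ^+ 2)^-1 = (y - 1) / (y ^+ 2 * (y + 1)).
    field; apply/andP; split; [lra|]; lra.
  apply: divr_ge0; first lra.
  apply: mulr_ge0; [exact: sqr_ge0|lra].
move: IH key; set S := \sum_(_ <= _ < _) _; set u := (y ^+ 2)^-1.
set v := 2 / y; set w := 2 / (y+1). lra.
Qed.

Lemma tail_bound (R : realType) (c : R) (j : nat) : 0 < c -> (0 < j)%N ->
  expR (- (Num.sqrt (j%:R) / c / 2)) <= 4096 * c ^+ 4 * ((j%:R : R) ^+ 2)^-1.
Proof.
move=> hc hj.
set s := Num.sqrt (j%:R : R).
have hj' : (0 : R) < j%:R by rewrite ltr0n.
have hs : 0 < s by rewrite /s sqrtr_gt0.
have hs4 : s ^+ 4 = (j%:R : R) ^+ 2.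
  by rewrite -[4%N]/(2 * 2)%N exprM sqr_sqrtr // ltW.
set t := s / c / 2.
have ht : 0 <= t / 4 by rewrite /t !divr_ge0 // ltW.
have e1 : (t / 4) ^+ 4 <= expR t.
  have -> : expR t = expR (t / 4) ^+ 4.
    by rewrite -expRM_natr; congr expR; rewrite -[t in LHS](@divfK _ 4) //; lra.
  apply: lerXn2r; rewrite ?inE ?expR_ge0 //.
    by rewrite nnegrE expR_ge0.
  have := expR_ge1Dx (t / 4); lra.
have e2 : (t / 4) ^+ 4 = (j%:R ^+ 2) / (4096 * c ^+ 4).
  rewrite -hs4 /t; field; lra.
have hpos : 0 < (t / 4) ^+ 4.
  apply: exprn_gt0; rewrite /t !divr_gt0 //.
rewrite expRN.
apply: (le_trans (y := ((t/4) ^+ 4)^-1)).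
  by rewrite lef_pV2 ?posrE ?expR_gt0.
by rewrite e2 invf_div.
Qed.

Lemma prod_if (R : realType) (m : R) (k n : nat) :
  \prod_(1 <= j < n.+1) (if (j <= k)%N then m else 1) = m ^+ minn n k.
Proof.
elim: n => [|n IH]; first by rewrite big_geq // min0n expr0.
rewrite big_nat_recr //= IH.
case: ifP => h.
  have -> : minn n.+1 k = (minn n k).+1 by lia.
  by rewrite exprSr.
have -> : minn n.+1 k = minn n k by lia.
by rewrite mulr1.
Qed.

Lemma factor_bound (R : realType) (N C lam : R) (j : nat) : 0 < C ->
  lemma3p1_factor N C lam j <=
  (if (j <= Num.truncn (4 * C ^+ 2 * (C * (`|lam| `^ N)) ^+ 2))%N
   then (1 + C) * expR (C * (`|lam| `^ N)) else 1)
  * expR (C * expR (- (Num.sqrt (j%:R) / C / 2))).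
Proof.
move=> hC; rewrite /lemma3p1_factor.
set x := `|lam| `^ N; set a := C * x; set s := Num.sqrt (j%:R : R).
have hx : 0 <= x by rewrite /x powR_ge0.
have ha : 0 <= a by rewrite /a mulr_ge0 // ltW.
have hs : 0 <= s by rewrite /s sqrtr_ge0.
have hsC : 0 <= s / C by rewrite divr_ge0 // ltW.
set E := expR (C * expR (- (s / C / 2))).
have hE : 1 <= E.
  have h0 : 0 <= C * expR (- (s / C / 2)) by rewrite mulr_ge0 ?expR_ge0 // ltW.
  have := expR_ge1Dx (C * expR (- (s / C / 2))); rewrite -/E; lra.
have hea : 1 <= expR a by have := expR_ge1Dx a; lra.
case: (ltP (s / C) (2 * a)) => h.
  have hb : (j <= Num.truncn (4 * C ^+ 2 * a ^+ 2))%N.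
    rewrite truncn_ge_nat; last by rewrite mulr_ge0 ?sqr_ge0 // mulr_ge0 ?sqr_ge0.
    have hs2 : s < 2 * C * a.
      have : s / C * C < 2 * a * C by rewrite ltr_pM2r.
      by rewrite divfK ?gt_eqF // mulrAC.
    have -> : (j%:R : R) = s ^+ 2 by rewrite /s sqr_sqrtr // ler0n.
    have -> : 4 * C ^+ 2 * a ^+ 2 = (2 * C * a) ^+ 2 by ring.
    apply: lerXn2r; [by rewrite nnegrE | rewrite nnegrE; apply: mulr_ge0 => //; apply: mulr_ge0 => //; lra | exact: ltW].
  rewrite hb.
  have e1 : expR (a - s / C) <= expR a by rewrite ler_expR; lra.
  have e2 : C * expR (a - s / C) <= C * expR a by rewrite ler_wpM2l // ltW.
  have e3 : 1 + C * expR a <= (1 + C) * expR a by rewrite mulrDl mul1r; lra.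
  have e4 : 0 <= (1 + C) * expR a by rewrite mulr_ge0 ?expR_ge0 //; lra.
  apply: (le_trans _ (ler_peMr e4 hE)); lra.
set M := (if _ then _ else _).
have hM : 1 <= M.
  rewrite /M; case: ifP => // _.
  rewrite mulrDl mul1r; have : 0 <= C * expR a by rewrite mulr_ge0 ?expR_ge0 // ltW.
  lra.
have e1 : expR (a - s / C) <= expR (- (s / C / 2)) by rewrite ler_expR; lra.
have e2 : C * expR (a - s / C) <= C * expR (- (s / C / 2)) by rewrite ler_wpM2l // ltW.
apply: (le_trans _ (ler_peMl (expR_ge0 _) hM)).
have := expR_ge1Dx (C * expR (- (s / C / 2))); rewrite -/E; lra.
Qed.

Theorem lemma3p1 (R : realType) (N : R) (hN : 0 < N) (C : R) (hC : 0 < C) :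
  exists C0 : R, forall lam : R,
    cvgn (partial_prod (lemma3p1_factor N C lam)) /\
    limn (partial_prod (lemma3p1_factor N C lam))
      <= C0 * expR (C0 * (`|lam| `^ (3 * N))).
Proof.
set L := ln (1 + C).
have hL : 0 <= L by apply: ln_ge0; lra.
set K := 4096 * C ^+ 4.
have hC4 : 0 <= C ^+ 4 by rewrite exprn_ge0 // ltW.
have hC5 : 0 <= C ^+ 5 by rewrite exprn_ge0 // ltW.
have hK : 0 <= K by apply: mulr_ge0; [exact: ler0n | exact: hC4].
have hKt : forall j : nat, (0 < j)%N ->
    expR (- (Num.sqrt (j%:R) / C / 2)) <= K * ((j%:R : R) ^+ 2)^-1.
  by move=> j hj; exact: tail_bound.
clearbody K.
set A := 4 * C ^+ 4 * L + 2 * C * K.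
set B := 4 * C ^+ 4 * L + 4 * C ^+ 5.
have hB : 0 <= B.
  have : 0 <= C ^+ 4 * L by rewrite mulr_ge0.
  rewrite /B; lra.
exists (expR A + B) => lam.
set u := partial_prod (lemma3p1_factor N C lam).
set x := `|lam| `^ N.
have hx : 0 <= x by rewrite /x powR_ge0.
set a := C * x.
have ha : 0 <= a by rewrite /a mulr_ge0 // ltW.
set b := 4 * C ^+ 2 * a ^+ 2.
have hb : 0 <= b by rewrite /b mulr_ge0 ?sqr_ge0 // mulr_ge0 ?sqr_ge0.
set k := Num.truncn b.
set m := (1 + C) * expR a.
have hm : 1 <= m.
  have hea : 1 <= expR a by have := expR_ge1Dx a; lra.
  rewrite /m mulrDl mul1r; have : 0 <= C * expR a by rewrite mulr_ge0 ?expR_ge0 // ltW.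
  lra.
have s5 : x ^+ 2 <= 1 + x ^+ 3.
  have -> : 1 + x ^+ 3 = x ^+ 2 + ((x - 1) ^+ 2 * (x + 1) + x) by ring.
  rewrite lerDl; apply: addr_ge0 => //; apply: mulr_ge0; [exact: sqr_ge0|lra].
have s6 : b * (L + a) + 2 * C * K <= A + B * x ^+ 3.
  have -> : b * (L + a) = (4 * C ^+ 4 * L) * x ^+ 2 + 4 * C ^+ 5 * x ^+ 3.
    by rewrite /b /a; ring.
  have : (4 * C ^+ 4 * L) * x ^+ 2 <= (4 * C ^+ 4 * L) * (1 + x ^+ 3).
    by rewrite ler_wpM2l // mulr_ge0 // mulr_ge0.
  rewrite /A /B; lra.
have bound : forall n, u n <= expR (A + B * x ^+ 3).
  move=> n.
  have s1 : u n <= \prod_(1 <= j < n.+1)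
      ((if (j <= k)%N then m else 1) * expR (C * expR (- (Num.sqrt (j%:R) / C / 2)))).
    rewrite /u /partial_prod; apply: ler_prod => j _; apply/andP; split.
      rewrite /lemma3p1_factor; have := expR_ge0 (C * `|lam| `^ N - Num.sqrt j%:R / C).
      have := hC; rewrite -/x => hC' h.
      have : 0 <= C * expR (C * x - Num.sqrt j%:R / C) by rewrite mulr_ge0 // ltW.
      lra.
    exact: factor_bound.
  have s2 : \sum_(1 <= j < n.+1) C * expR (- (Num.sqrt j%:R / C / 2)) <= 2 * C * K.
    apply: (le_trans (y := \sum_(1 <= j < n.+1) C * (K * ((j%:R : R) ^+ 2)^-1))).
      apply: ler_sum_nat => j /andP[hj _].
      by apply: ler_wpM2l; [exact: ltW | exact: hKt].
    rewrite -mulr_sumr -mulr_sumr.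
    have := sum_inv_sq R n.
    have h2 : 0 <= 2 / (n.+1%:R : R) by rewrite divr_ge0 // ler0n.
    set S := \sum_(_ <= _ < _) _ => hS.
    have : C * (K * S) <= C * (K * 2).
      apply: ler_wpM2l; first exact: ltW.
      apply: ler_wpM2l; first exact: hK.
      apply: (le_trans hS); rewrite gerBl; exact: h2.
    suff -> : 2 * C * K = C * (K * 2) by [].
    ring.
  have s4 : m ^+ k <= expR (b * (L + a)).
    have hmpos : 0 < m by exact: lt_le_trans ltr01 hm.
    rewrite -(lnK hmpos) -expRM_natl ler_expR.
    have -> : ln m = L + a by rewrite /m lnM ?expRK // posrE; [lra| exact: expR_gt0].
    apply: ler_wpM2r; first lra.
    by rewrite /k truncn_le.
  rewrite big_split /= prod_if -expR_sum in s1.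
  have s3 : m ^+ minn n k <= m ^+ k by apply: ler_weXn2l => //; exact: geq_minr.
  apply: (le_trans s1).
  apply: (le_trans (y := expR (b * (L + a)) * expR (2 * C * K))).
    apply: ler_pM; rewrite ?expR_ge0 //.
    - exact: exprn_ge0 (le_trans ler01 hm).
    - exact: le_trans s3 s4.
    - by rewrite ler_expR.
  by rewrite -expRD ler_expR.
have hmono : {homo u : n m / (n <= m)%N >-> n <= m}.
  apply/nondecreasing_seqP => n.
  rewrite /u /partial_prod [in X in _ <= X]big_nat_recr //=.
  apply: ler_peMr.
    apply: prodr_ge0 => j _; rewrite /lemma3p1_factor.
    have : 0 <= C * expR (C * `|lam| `^ N - Num.sqrt j%:R / C) by rewrite mulr_ge0 ?expR_ge0 // ltW.
    lra.
  rewrite /lemma3p1_factor lerDl; apply: mulr_ge0; [exact: ltW | exact: expR_ge0].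
have cv : cvgn u.
  apply: nondecreasing_is_cvgn; first exact: hmono.
  exists (expR (A + B * x ^+ 3)); move=> y [n _ <-]; exact: bound.
split => //.
have e3 : `|lam| `^ (3 * N) = x ^+ 3 by rewrite mulrC powRrM powR_mulrn.
rewrite e3.
apply: (le_trans (y := expR (A + B * x ^+ 3))).
  by apply: limr_le => //; apply: nearW.
rewrite expRD.
have hx3 : 0 <= x ^+ 3 by rewrite exprn_ge0.
apply: ler_pM; rewrite ?expR_ge0 //.
- have := expR_ge0 A; lra.
- rewrite ler_expR ler_wpM2r //; have := expR_gt0 A; lra.
Qed.
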